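(* Let $\mathcal{C}$ be a $\beta$-avoiding simplicial complex. Then its Alexander dual $\mathcal{C}^*$ is also $\beta$-avoiding.
   Context: A simplicial complex on a finite ground set $V$ is a family of subsets of $V$ closed under subsets; isomorphism means a bijection of ground sets carrying faces onto faces. The Alexander dual is $\mathcal{C}^*=\{S\subseteq V: V\setminus S\notin\mathcal{C}\}$. For $S\subseteq V$, $\mathcal{C}\setminus S$ is the induced subcomplex $\{F\in\mathcal{C}:F\cap S=\emptyset\}$ on $V\setminus S$; for a face $R$, $\operatorname{link}_R(\mathcal{C})=\{F\setminus R: R\subseteq F\in\mathcal{C}\}$ on $V\setminus R$. A minor of $\mathcal{C}$ is $\operatorname{link}_R(\mathcal{C}\setminus S)$ with $S\cap R=\emptyset$ and $R$ a face of $\mathcal{C}$. $\mathcal{C}$ is $\beta$-avoiding if no minor is isomorphic to any of: $P_4$ (on $\{1,2,3,4\}$, facets $12,23,34$); $O_6$ (on $\{1,\dots,6\}$, faces the subsets containing none of $\{1,2\},\{3,4\},\{5,6\}$) or $O_6^*$; $J_1$ (on $\{1,\dots,5\}$, facets $12,15,234,345$) or $J_1^*$ (facets $134,235,245$); $J_2$ (on $\{1,\dots,5\}$, facets $12,235,34,145$); $\partial\Delta_n\sqcup\{v\}$ for $n\ge1$ (all proper subsets of an $(n+1)$-set, together with one extra isolated vertex $v$). *)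

(* Defs.v *)
From mathcomp Require Import all_boot.
Set Implicit Arguments. Unset Strict Implicit. Unset Printing Implicit Defensive.

(* A (candidate) simplicial complex inside an ambient finite type V:
   a ground set [gr] (the vertex set V of the paper) and a family of faces. *)
Record cplx (V : finType) := Cplx { gr : {set V}; fc : {set {set V}} }.

Definition is_complex (V : finType) (K : cplx V) : Prop :=
  (forall A, A \in fc K -> A \subset gr K) /\
  (forall A B : {set V}, B \in fc K -> A \subset B -> A \in fc K).

Definition adual (V : finType) (K : cplx V) : cplx V :=
  Cplx (gr K) [set S : {set V} | (S \subset gr K) && (gr K :\: S \notin fc K)].

Definition cdel (V : finType) (K : cplx V) (S : {set V}) : cplx V :=
  Cplx (gr K :\: S) [set A in fc K | [disjoint A & S]].

Definition clink (V : finType) (K : cplx V) (R : {set V}) : cplx V :=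
  Cplx (gr K :\: R) [set A :\: R | A in fc K & R \subset A].

Definition ciso (V W : finType) (K : cplx V) (L : cplx W) : Prop :=
  exists f : V -> W,
    [/\ {in gr K &, injective f}, f @: gr K = gr L &
        forall A : {set V}, A \subset gr K -> (A \in fc K) = (f @: A \in fc L)].

Definition gen_cplx (k : nat) (facets : seq {set 'I_k}) : cplx 'I_k :=
  Cplx [set: 'I_k] [set A : {set 'I_k} | has (fun F : {set 'I_k} => A \subset F) facets].

Definition vs (k : nat) (l : seq nat) : {set 'I_k.+1} := [set x : 'I_k.+1 | x \in map inord l].

(* Vertices 1..n of the paper are 0..n-1 here. *)
Definition P4 : cplx 'I_4 := gen_cplx [:: vs 3 [:: 0; 1]; vs 3 [:: 1; 2]; vs 3 [:: 2; 3]].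

Definition O6 : cplx 'I_6 :=
  Cplx [set: 'I_6]
    [set A : {set 'I_6} | ~~ (vs 5 [:: 0; 1] \subset A) && ~~ (vs 5 [:: 2; 3] \subset A)
                          && ~~ (vs 5 [:: 4; 5] \subset A)].

Definition O6d : cplx 'I_6 := adual O6.

Definition J1 : cplx 'I_5 :=
  gen_cplx [:: vs 4 [:: 0; 1]; vs 4 [:: 0; 4]; vs 4 [:: 1; 2; 3]; vs 4 [:: 2; 3; 4]].

Definition J1d : cplx 'I_5 :=
  gen_cplx [:: vs 4 [:: 0; 2; 3]; vs 4 [:: 1; 2; 4]; vs 4 [:: 1; 3; 4]].

Definition J2 : cplx 'I_5 :=
  gen_cplx [:: vs 4 [:: 0; 1]; vs 4 [:: 1; 2; 4]; vs 4 [:: 2; 3]; vs 4 [:: 0; 3; 4]].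

(* boundary of Delta_n (on vertices 0..n) plus isolated vertex n+1, on 'I_(n+2). *)
Definition bdry_plus (n : nat) : cplx 'I_n.+2 :=
  Cplx [set: 'I_n.+2]
    [set A : {set 'I_n.+2} |
       ((A \subset [set i : 'I_n.+2 | i <= n]) && (A != [set i : 'I_n.+2 | i <= n]))
       || (A == [set ord_max])].

Definition forbidden (V : finType) (K : cplx V) : Prop :=
  ciso K P4 \/ ciso K O6 \/ ciso K O6d \/ ciso K J1 \/
  ciso K J1d \/ ciso K J2 \/ (exists n, (1 <= n)%N /\ ciso K (bdry_plus n)).

Definition beta_avoiding (V : finType) (K : cplx V) : Prop :=
  forall S R : {set V}, S \subset gr K -> R \in fc K -> [disjoint S & R] ->
    ~ forbidden (clink (cdel K S) R).

(* Main.v *)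
Require Import Defs.
From mathcomp Require Import all_boot.
Set Implicit Arguments. Unset Strict Implicit. Unset Printing Implicit Defensive.

Ltac ptw x := repeat match goal with
 | H : is_true [disjoint ?A & ?B] |- _ =>
     move: (disjoint_setI0 H) => /setP /(_ x); rewrite in_set0 => /negbT; clear H
 | H : is_true (?A \subset ?B) |- _ => move: (subsetP H x) => /implyP; clear H
 end.
Ltac bsolve := rewrite /= ?inE; repeat match goal with |- context [?y \in ?A] => case: (y \in A) end; by intros.
Ltac seteq := let x := fresh "x" in apply/setP => x; ptw x; bsolve.
Ltac sett := first [ seteq | (let x := fresh "x" in apply/subsetP => x; ptw x; bsolve)
  | (rewrite -setI_eq0; apply/eqP; seteq) ].

Definition agree (V : finType) (K L : cplx V) :=
  gr K = gr L /\ forall A : {set V}, A \subset gr K -> (A \in fc K) = (A \in fc L).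

Lemma adual_mem (V : finType) (K : cplx V) (A : {set V}) :
  (A \in fc (adual K)) = (A \subset gr K) && (gr K :\: A \notin fc K).
Proof. by rewrite inE. Qed.

Lemma ciso_agree (V W : finType) (K K' : cplx V) (L : cplx W) :
  agree K K' -> ciso K L -> ciso K' L.
Proof.
move=> [eg ef] [f [fi fim ff]]; exists f; split; rewrite -?eg //.
by move=> A AK; rewrite -ef ?ff.
Qed.

Lemma ciso_refl (V : finType) (K : cplx V) : ciso K K.
Proof. by exists id; split => [x y _ _||A _]; rewrite ?imset_id. Qed.

Lemma ciso_trans (V W U : finType) (K : cplx V) (L : cplx W) (M : cplx U) :
  ciso K L -> ciso L M -> ciso K M.
Proof.
move=> [f [fi fim ff]] [g [gi gim gf]]; exists (g \o f); split.
- move=> x y xK yK /= e; apply: fi => //.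
  have hx : f x \in gr L by rewrite -fim; exact: imset_f.
  have hy : f y \in gr L by rewrite -fim; exact: imset_f.
  exact: gi hx hy e.
- by rewrite imset_comp fim.
- move=> A AK; have hA : f @: A \subset gr L by rewrite -fim; exact: imsetS.
  by rewrite ff // gf // imset_comp.
Qed.

Lemma imsetD_in (V W : finType) (f : V -> W) (G A : {set V}) :
  {in G &, injective f} -> A \subset G -> f @: (G :\: A) = f @: G :\: f @: A.
Proof.
move=> fi AG; apply/setP => y; rewrite inE; apply/imsetP/andP.
  move=> [x]; rewrite inE => /andP [xA xG] ->; split; last exact: imset_f.
  apply/imsetP => [[z zA]] /fi; move: (subsetP AG z zA) => zG /(_ xG zG) e.
  by move: xA; rewrite e zA.
move=> [yA /imsetP [x xG yE]]; exists x => //; rewrite inE xG andbT.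
by move: yA; rewrite yE; apply: contra => xA; exact: imset_f.
Qed.

Lemma ciso_dual (V W : finType) (K : cplx V) (L : cplx W) :
  ciso K L -> ciso (adual K) (adual L).
Proof.
move=> [f [fi fim ff]]; exists f; split => // A /= AK.
rewrite !adual_mem AK -fim imsetS //= -imsetD_in // ff //; exact: subsetDl.
Qed.

Lemma agree_dual2 (V : finType) (K : cplx V) : agree (adual (adual K)) K.
Proof.
split => // A AK; rewrite !adual_mem /= subsetDl AK /= negbK.
by have -> : gr K :\: (gr K :\: A) = A by seteq.
Qed.
Section Key.
Variables (V : finType) (K : cplx V) (S R : {set V}).
Hypotheses (hS : S \subset gr K) (hR : R \subset gr K) (hSR : [disjoint S & R]).

Lemma inM (B : {set V}) : B \subset (gr K :\: S) :\: R ->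
  (B \in fc (clink (cdel (adual K) S) R)) = (gr K :\: (B :|: R) \notin fc K).
Proof.
move=> hB; apply/imsetP/idP => [[A] | H].
  rewrite inE => /andP [HA HRA] ->.
  move: HA; rewrite inE adual_mem => /andP [/andP [Ag An] AS].
  by have -> : (A :\: R) :|: R = A by sett.
exists (B :|: R).
  rewrite inE /= inE adual_mem H andbT -!andbA; apply/and3P; split; sett.
by sett.
Qed.

Lemma inNd (B : {set V}) : B \subset (gr K :\: S) :\: R ->
  (B \in fc (adual (clink (cdel K R) S))) = (gr K :\: (B :|: R) \notin fc K).
Proof.
move=> hB; rewrite adual_mem /=.
have -> /= : B \subset gr K :\: R :\: S by sett.
congr (~~ _); apply/imsetP/idP => [[A] | H].
  rewrite inE => /andP [HA SA] E; move: HA; rewrite inE => /andP [HA AR].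
  have -> : gr K :\: (B :|: R) = ((gr K :\: R :\: S) :\: B) :|: S by sett.
  by rewrite E; have -> : A :\: S :|: S = A by sett.
exists (gr K :\: (B :|: R)); last by sett.
rewrite inE /= inE H /=; apply/andP; split; sett.
Qed.

Lemma agreeMN : agree (clink (cdel (adual K) S) R) (adual (clink (cdel K R) S)).
Proof.
split; first by rewrite /=; sett.
by move=> B hB; rewrite inM // inNd.
Qed.

Lemma grM_in : S \notin fc K -> gr (clink (cdel (adual K) S) R) \in fc (clink (cdel (adual K) S) R).
Proof.
move=> HS; rewrite inM //=.
by have -> : gr K :\: (gr K :\: S :\: R :|: R) = S by sett.
Qed.
End Key.

Arguments inord : simpl never.

Lemma L1 k l (A : {set 'I_k.+1}) :
  (vs k l \subset A) = all (fun j => inord j \in A) l.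
Proof.
apply/subsetP/allP => [H j jl | H x].
  by apply: H; rewrite inE; apply/mapP; exists j.
by rewrite inE => /mapP [j jl ->]; apply: H.
Qed.

Lemma L2 k l (A : {set 'I_k.+1}) : all (fun j => j <= k) l ->
  (A \subset vs k l) = all (fun j => (j \in l) || (inord j \notin A)) (iota 0 k.+1).
Proof.
move=> /allP hl; apply/subsetP/allP => [H j | H x xA].
  rewrite mem_iota add0n => jk; case: (boolP (inord j \in A)); last by rewrite orbT.
  move=> /H; rewrite orbF inE => /mapP [j' j'l] Hj.
  have := congr1 val Hj.
  by rewrite /= !inordK // ?ltnS ?hl // => ->.
have := H (val x); rewrite mem_iota add0n ltn_ord inord_val xA orbF => /(_ isT) xl.
by rewrite inE; apply/mapP; exists (val x) => //; rewrite inord_val.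
Qed.

Lemma in_imset_inv (T : finType) (f : T -> T) (A : {set T}) y :
  involutive f -> (y \in f @: A) = (f y \in A).
Proof.
move=> fK; apply/imsetP/idP => [[x xA ->] | H]; first by rewrite fK.
by exists (f y); rewrite ?fK.
Qed.

Lemma gen_mem k (fs : seq {set 'I_k}) (A : {set 'I_k}) :
  (A \in fc (gen_cplx fs)) = has (fun F : {set 'I_k} => A \subset F) fs.
Proof. by rewrite inE. Qed.

Definition pf n (l : seq nat) (x : 'I_n.+1) : 'I_n.+1 := inord (nth 0 l x).
Arguments pf : simpl never.

Lemma pf_inord n l j : j <= n -> @pf n l (inord j) = inord (nth 0 l j).
Proof. by move=> jn; rewrite /pf inordK. Qed.

Lemma pf_inv n l : all (fun j => (nth 0 l j <= n) && (nth 0 l (nth 0 l j) == j)) (iota 0 n.+1) ->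
  involutive (@pf n l).
Proof.
move=> /allP H x; apply/val_inj; rewrite /pf.
have xi : val x \in iota 0 n.+1 by rewrite mem_iota add0n ltn_ord.
have /andP [h1 /eqP h2] := H _ xi.
by rewrite inordK ?ltnS // h2 inord_val.
Qed.

Lemma ciso_inv k (K L : cplx 'I_k) f : gr K = setT -> gr L = setT -> involutive f ->
  (forall A, (A \in fc K) = (f @: A \in fc L)) -> ciso K L.
Proof.
move=> gK gL fK ff; exists f; split => //.
- by move=> x y _ _; apply: inv_inj.
- by rewrite gK gL; apply/setP => y; rewrite in_imset_inv // !inE.
Qed.

Ltac fin5 A := move: (inord 0 \in A) (inord 1 \in A) (inord 2 \in A) (inord 3 \in A) (inord 4 \in A) => [] [] [] [] []; by [].
Ltac fin4 A := move: (inord 0 \in A) (inord 1 \in A) (inord 2 \in A) (inord 3 \in A) => [] [] [] []; by [].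
Ltac fin6 A := move: (inord 0 \in A) (inord 1 \in A) (inord 2 \in A) (inord 3 \in A) (inord 4 \in A) (inord 5 \in A) => [] [] [] [] [] []; by [].

Ltac expand fK := rewrite ?adual_mem /= ?subsetT !inE /= ?subsetT /= ?L1 ?L2 //= !(in_imset_inv _ _ fK) !pf_inord //= !inE /=.

Lemma cP4 : ciso (adual P4) P4.
Proof.
have fK := @pf_inv 3 [:: 3; 1; 2; 0] isT.
apply: (ciso_inv _ _ fK) => // A.
expand fK. fin4 A.
Qed.

Lemma cO6d : ciso (adual O6d) O6.
Proof.
have fK := @pf_inv 5 [:: 0; 1; 2; 3; 4; 5] isT.
apply: (ciso_inv _ _ fK) => // A.
expand fK. fin6 A.
Qed.

Lemma cJ1 : ciso (adual J1) J1d.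
Proof.
have fK := @pf_inv 4 [:: 0; 1; 2; 3; 4] isT.
apply: (ciso_inv _ _ fK) => // A.
expand fK. fin5 A.
Qed.

Lemma cJ1d : ciso (adual J1d) J1.
Proof.
have fK := @pf_inv 4 [:: 0; 1; 2; 3; 4] isT.
apply: (ciso_inv _ _ fK) => // A.
expand fK. fin5 A.
Qed.

Lemma cJ2 : ciso (adual J2) J2.
Proof.
have fK := @pf_inv 4 [:: 1; 0; 2; 3; 4] isT.
apply: (ciso_inv _ _ fK) => // A.
expand fK. fin5 A.
Qed.

Lemma bdryD n : [set i : 'I_n.+2 | i <= n] = ~: [set ord_max].
Proof.
apply/setP => i; rewrite !inE -val_eqE /= -ltnS.
by rewrite ltn_neqAle -ltnS ltn_ord andbT.
Qed.

Lemma cB n : ciso (adual (bdry_plus n)) (bdry_plus n).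
Proof.
have fK : involutive (@id 'I_n.+2) by [].
apply: (ciso_inv _ _ fK) => // A; rewrite imset_id adual_mem /= subsetT /= !inE bdryD setTD.
set m := (@ord_max n.+1).
have sC : forall B : {set 'I_n.+2}, (B \subset ~: [set m]) = (m \notin B).
  move=> B; apply/subsetP/idP => [H | H x xB]; first by apply/negP => mB; move: (H _ mB); rewrite !inE eqxx.
  by rewrite !inE; apply: contra H => /eqP <-.
rewrite !sC (inj_eq (@setC_inj _)) in_setC negbK.
have -> : (~: A == [set m]) = (A == ~: [set m]) by rewrite -(inj_eq (@setC_inj _)) setCK.
have hne : [set m] != ~: [set m] by apply/eqP => /setP /(_ m); rewrite !inE eqxx.
case: (eqVneq A [set m]) => [-> | hA]; first by rewrite (negbTE hne) /= andbF orbT.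
case: (eqVneq A (~: [set m])) => [-> | hA']; first by rewrite orbT andbF.
by rewrite /= !andbT !orbF.
Qed.

Lemma ciso_full (V W : finType) (K : cplx V) (L : cplx W) :
  ciso K L -> gr L \notin fc L -> gr K \notin fc K.
Proof. by move=> [f [_ fim ff]]; rewrite ff // fim. Qed.

Lemma forbidden_full (V : finType) (K : cplx V) : forbidden K -> gr K \notin fc K.
Proof.
case=> [h|[h|[h|[h|[h|[h|[n [_ h]]]]]]]]; apply: (ciso_full h).
- by rewrite /= !inE /= !L2 //= !inE.
- by rewrite /= !inE !subsetT.
- by rewrite adual_mem /= subsetT setDv /= inE !L1 /= !inE.
- by rewrite /= !inE /= !L2 //= !inE.
- by rewrite /= !inE /= !L2 //= !inE.
- by rewrite /= !inE /= !L2 //= !inE.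
- rewrite /= inE bdryD; apply/negP => /orP [/andP [h1 _] | /eqP h1].
    by move: (subsetP h1 ord_max (in_setT _)); rewrite !inE eqxx.
  by move/setP: h1 => /(_ ord0); rewrite !inE -val_eqE.
Qed.

Lemma forbidden_agree (V : finType) (K K' : cplx V) : agree K K' -> forbidden K -> forbidden K'.
Proof.
move=> a [h|[h|[h|[h|[h|[h|[n [hn h]]]]]]]].
- by left; exact: ciso_agree a h.
- by right; left; exact: ciso_agree a h.
- by right; right; left; exact: ciso_agree a h.
- by right; right; right; left; exact: ciso_agree a h.
- by right; right; right; right; left; exact: ciso_agree a h.
- by right; right; right; right; right; left; exact: ciso_agree a h.
- by right; right; right; right; right; right; exists n; split => //; exact: ciso_agree a h.
Qed.

Lemma forbidden_dual (V : finType) (K : cplx V) : forbidden K -> forbidden (adual K).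
Proof.
move=> [h|[h|[h|[h|[h|[h|[n [hn h]]]]]]]]; move/ciso_dual: h => h.
- by left; exact: ciso_trans h cP4.
- by right; right; left.
- by right; left; exact: ciso_trans h cO6d.
- by right; right; right; right; left; exact: ciso_trans h cJ1.
- by right; right; right; left; exact: ciso_trans h cJ1d.
- by right; right; right; right; right; left; exact: ciso_trans h cJ2.
- by right; right; right; right; right; right; exists n; split => //; exact: ciso_trans h (cB n).
Qed.

Unset Implicit Arguments.

Theorem proposition4p3 (V : finType) (K : cplx V) :
  is_complex K -> beta_avoiding K -> beta_avoiding (adual K).
Proof.
move=> _ HK S R HS HR HSR Hf.
move: HR; rewrite adual_mem => /andP [HRg _].
have HSg : S \subset gr K := HS.
case: (boolP (S \in fc K)) => HSK.
  apply: (HK R S HRg HSK); first by rewrite disjoint_sym.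
  apply: (forbidden_agree (agree_dual2 _)); apply: forbidden_dual.
  exact: forbidden_agree (agreeMN HSg HRg HSR) Hf.
by move: (forbidden_full Hf); rewrite grM_in.
Qed.
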